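(* Let $P$ be a finite poset, $\epsilon\in\{1,-1\}$, $\xi\in S^{(\epsilon)}$ and $d=\xi(-\infty)$. Then $T^\xi$ is not a generator of $\omega^{(\epsilon)}$ if and only if there is an antichain $A$ of $P$ (possibly empty) such that for every $C\in C_\xi^{[d-\epsilon]}$ we have $C\cap A\neq\emptyset$ and $\xi(a)>\epsilon$ for the unique element $a\in C\cap A$ (the condition holds trivially when $C_\xi^{[d-\epsilon]}=\emptyset$).
   Context: $P^-=P\cup\{-\infty\}$; $\xi^+(B)=\sum_{b\in B}\xi(b)$. $S^{(m)}=\{\xi\in\mathbb Z^{P^-}:\xi(x)\ge m\ \forall x\in P,\ \xi(-\infty)\ge\xi^+(C)+m$ for every maximal chain $C$ of $P\}$. $C_\xi^{[m]}$ is the set of maximal chains $C$ of $P$ with $\xi^+(C)=m$. $T^\xi=\prod_{x\in P^-}T_x^{\xi(x)}$, $\deg T^\xi=\xi(-\infty)$. $R=\mathbb K[\mathcal C(P)]=\bigoplus_{\xi\in S^{(0)}}\mathbb KT^\xi$ is the Ehrhart ring of the chain polytope, $\omega^{(1)}=\omega=\bigoplus_{\xi\in S^{(1)}}\mathbb KT^\xi$ its canonical ideal and $\omega^{(-1)}=R:\omega=\bigoplus_{\xi\in S^{(-1)}}\mathbb KT^\xi$ its anticanonical ideal. A Laurent monomial $T^\xi\in\omega^{(\epsilon)}$ is a generator of $\omega^{(\epsilon)}$ if it belongs to the (unique) minimal monomial generating set of the $R$-module $\omega^{(\epsilon)}$, i.e. it is not of the form $T^{\xi_1}T^{\xi_2}$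 with $\xi_1\in S^{(0)}$, $\xi_1(-\infty)>0$, $\xi_2\in S^{(\epsilon)}$. *)

(* Defs.v *)
From HB Require Import structures.
From mathcomp Require Import all_boot all_order all_algebra.
Set Implicit Arguments. Unset Strict Implicit. Unset Printing Implicit Defensive.
Import Order.TTheory GRing.Theory Num.Theory.
Local Open Scope ring_scope.

(* P is a finite poset T : finPOrderType disp.  P^- = P ∪ {-∞} is modelled
   as option T, with None = -∞.  An exponent vector ξ ∈ Z^{P^-} is a
   function xi : option T -> int. *)

Section Poset.
Context {disp : Order.disp_t} {T : finPOrderType disp}.

Definition is_chain (C : {set T}) : Prop :=
  forall x y, x \in C -> y \in C -> (x <= y)%O \/ (y <= x)%O.

Definition is_antichain (A : {set T}) : Prop :=
  forall x y, x \in A -> y \in A -> (x <= y)%O -> x = y.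

Definition is_max_chain (C : {set T}) : Prop :=
  is_chain C /\ forall D : {set T}, is_chain D -> C \subset D -> D = C.

Definition xiplus (xi : option T -> int) (B : {set T}) : int :=
  \sum_(b in B) xi (Some b).

Definition inS (m : int) (xi : option T -> int) : Prop :=
  (forall x : T, m <= xi (Some x)) /\
  (forall C : {set T}, is_max_chain C -> xiplus xi C + m <= xi None).

(* T^xi is a generator of omega^{(eps)}: T^xi ∈ omega^{(eps)} and it is not
   of the form T^{xi1} T^{xi2} = T^{xi1 + xi2} with xi1 ∈ S^{(0)},
   xi1(-∞) > 0, xi2 ∈ S^{(eps)}. *)
Definition is_generator (eps : int) (xi : option T -> int) : Prop :=
  inS eps xi /\
  ~ (exists xi1 xi2 : option T -> int,
        [/\ inS 0 xi1, 0 < xi1 None, inS eps xi2 &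
            forall p, xi p = xi1 p + xi2 p]).

End Poset.

(* Main.v *)
Require Import Defs.
From HB Require Import structures.
From mathcomp Require Import all_boot all_order all_algebra.
From mathcomp Require Import zify.
From Stdlib Require Import Classical.
Import Order.TTheory GRing.Theory Num.Theory.
Local Open Scope ring_scope.

Section Aux.
Context {disp : Order.disp_t} {T : finPOrderType disp}.

Definition chainb (C : {set T}) : bool :=
  [forall x in C, forall y in C, (x <= y)%O || (y <= x)%O].

Lemma chainbP (C : {set T}) : reflect (is_chain C) (chainb C).
Proof.
apply: (iffP forall_inP) => [H x y xC yC | H x xC].
  by have /forall_inP /(_ y yC) /orP := H x xC.
by apply/forall_inP => y yC; apply/orP; apply: H.
Qed.

Lemma ext_max_chain (D : {set T}) : is_chain D ->
  exists C, is_max_chain C /\ D \subset C.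
Proof.
move=> /chainbP hD.
have hP : (fun C : {set T} => chainb C && (D \subset C)) D by rewrite /= hD subxx.
case: (@arg_maxnP _ D (fun C : {set T} => chainb C && (D \subset C)) (fun C : {set T} => #|C|) hP) => C /andP[hC hDC] hmax.
exists C; split => //; split; first exact/chainbP.
move=> E /chainbP hE hCE; apply/eqP; rewrite eq_sym eqEcard hCE /=.
apply: hmax; rewrite hE /=; exact: subset_trans hDC hCE.
Qed.

Lemma xiplus_sub (f : option T -> int) (D C : {set T}) :
  D \subset C -> (forall x, 0 <= f (Some x)) -> xiplus f D <= xiplus f C.
Proof.
move=> hDC hf; rewrite /xiplus [X in _ <= X](big_setID D) /=.
rewrite (setIidPr hDC) lerDl; exact: sumr_ge0.
Qed.

Lemma xiplus_add (f g h : option T -> int) (C : {set T}) :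
  (forall p, f p = g p + h p) -> xiplus f C = xiplus g C + xiplus h C.
Proof. by move=> H; rewrite /xiplus -big_split /=; apply: eq_bigr. Qed.

End Aux.

Theorem mainTheorem7 (disp : Order.disp_t) (T : finPOrderType disp)
  (eps : int) (heps : eps = 1 \/ eps = -1)
  (xi : option T -> int) (hxi : inS eps xi) :
  let d := xi None in
  ~ is_generator eps xi <->
  exists A : {set T}, is_antichain A /\
    forall C : {set T}, is_max_chain C -> xiplus xi C = d - eps ->
      exists a : T, C :&: A = [set a] /\ eps < xi (Some a).
Proof.
move=> d; split.
- move=> hng.
  have [xi1 [xi2 [h1 hpos h2 hsum]]] : exists xi1 xi2 : option T -> int,
        [/\ inS 0 xi1, 0 < xi1 None, inS eps xi2 &
            forall p, xi p = xi1 p + xi2 p].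
    by apply: NNPP => hn; apply: hng; split.
  case: h1 => h1a h1b; case: h2 => h2a h2b.
  pose A := [set x | (0 < xi1 (Some x)) &&
                     [forall y, (y < x)%O ==> (xi1 (Some y) == 0)]].
  exists A; split.
    move=> x y; rewrite !inE => /andP[hx _] /andP[_ /forallP hy] hxy.
    apply/eqP; apply: contraT => hne.
    have hlt : (x < y)%O by rewrite lt_neqAle hne hxy.
    by move: (hy x); rewrite hlt /= => /eqP h; rewrite h ltxx in hx.
  move=> C hC htight.
  have e1 := h1b C hC; have e2 := h2b C hC.
  have hs := xiplus_add _ _ _ C hsum.
  have hk : xiplus xi1 C = xi1 None by rewrite /d hsum in htight; lia.
  have [c0 hc0] : exists c, (c \in C) && (0 < xi1 (Some c)).
    apply: NNPP => hn.
    have : xiplus xi1 C = 0.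
      rewrite /xiplus big1 // => c cC.
      have := h1a c; rewrite le_eqVlt => /orP[/eqP <- //|hc].
      by case: hn; exists c; rewrite cC hc.
    lia.
  pose S := [pred c | (c \in C) && (0 < xi1 (Some c))].
  case: (arg_minnP (fun c => #|[set y | (y < c)%O]|) (hc0 : S c0)) => a.
  rewrite /S /= => /andP[aC apos] hmin.
  have nolt : forall b, b \in C -> 0 < xi1 (Some b) -> ~ (b < a)%O.
    move=> b bC bpos hba.
    have := hmin b; rewrite /S /= bC bpos => /(_ isT).
    apply/negP; rewrite -ltnNge; apply: proper_card; apply/properP; split.
      by apply/subsetP => y; rewrite !inE => hy; exact: lt_trans hy hba.
    by exists b; rewrite !inE ?ltxx.
  have below0 : forall c, c \in C -> (c < a)%O -> xi1 (Some c) = 0.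
    move=> c cC hca; have := h1a c; rewrite le_eqVlt => /orP[/eqP <- //|hc].
    by case: (nolt c cC hc hca).
  have hchain := hC.1.
  have aA : a \in A.
    rewrite inE apos /=; apply/forallP => y; apply/implyP => hya.
    apply/eqP; apply: NNPP => hy.
    have ypos : 0 < xi1 (Some y) by rewrite lt_neqAle eq_sym; apply/andP; split; [apply/eqP|].
    pose E := [set c in C | (a <= c)%O].
    have yE : y \notin E by rewrite inE negb_and; apply/orP; right; apply/negP => hay; have := lt_le_trans hya hay; rewrite ltxx.
    have hD : is_chain (y |: E).
      move=> u v; rewrite !inE => /orP[/eqP->|/andP[uC hu]] /orP[/eqP->|/andP[vC hv]].
      + by left.
      + by left; apply: le_trans (ltW hya) hv.
      + by right; apply: le_trans (ltW hya) hu.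
      + exact: hchain.
    have [C' [hC' hsub]] := ext_max_chain _ hD.
    have := xiplus_sub _ _ _ hsub h1a.
    rewrite /xiplus big_setU1 //=.
    have <- : xiplus xi1 C = \sum_(b in E) xi1 (Some b).
      rewrite /xiplus (bigID (fun c => (a <= c)%O)) /=.
      rewrite [X in _ + X = _]big1 ?addr0.
        by apply: eq_bigl => c; rewrite inE.
      move=> c /andP[cC hc]; apply: below0 => //.
      case: (hchain c a cC aC) => hac; last by rewrite hac in hc.
      by rewrite lt_neqAle hac andbT; apply: contraNneq hc => ->.
    have := h1b C' hC'; move: ypos; rewrite /xiplus in hk *; rewrite hk; move: (\sum_(b in C') _) (xi1 (Some y)) (xi1 None) => s1 s2 s3; lia.
  exists a; split.
    apply/setP => z; rewrite in_setI in_set1; apply/idP/idP.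
      move=> /andP[zC zA]; apply/eqP; apply: contraTeq zA => hne.
      rewrite inE negb_and; apply/orP; case: (ltrP 0 (xi1 (Some z))) => zpos; [right|by left].
      rewrite negb_forall; apply/existsP; exists a.
      have haz : (a < z)%O.
        case: (hchain z a zC aC) => hza.
          by case: (nolt z zC zpos); rewrite lt_neqAle hne hza.
        by rewrite lt_neqAle eq_sym hne hza.
      by rewrite haz /= gt_eqF.
    by move/eqP->; rewrite aC aA.
  rewrite hsum; have := h2a a; lia.
- case=> A [hA hAC] [_ hn]; apply: hn.
  pose A' := [set x in A | eps < xi (Some x)].
  pose xi1 := fun p : option T => match p with
                | None => 1 | Some x => if x \in A' then 1 else 0 : int end.
  pose xi2 := fun p => xi p - xi1 p.
  have key : forall C : {set T}, is_chain C ->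
      (exists2 a, a \in C & a \in A') /\ xiplus xi1 C = 1 \/
      xiplus xi1 C = 0.
    move=> C hc.
    case: (boolP [exists a in C, a \in A']) => [/exists_inP [a aC aA']|hno].
      left; split; first by exists a.
      rewrite /xiplus (bigD1 a) //= aA' big1 ?addr0 // => b /andP[bC hba].
      case: ifP => // bA'; exfalso; move: hba => /eqP; apply.
      move: bA' aA'; rewrite !inE => /andP[bA _] /andP[aA _].
      by case: (hc b a bC aC) => h; [apply: hA | symmetry; apply: hA].
    right; rewrite /xiplus big1 // => b bC /=.
    case: ifP => // bA'; move: hno; rewrite negb_exists_in => /forall_inP.
    by move=> /(_ b bC); rewrite bA'.
  exists xi1, xi2; split.
  + split; first by move=> x /=; case: ifP.
    move=> C hC; rewrite addr0 /=.
    by case: (key C hC.1) => [[_ ->]|->].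
  + by [].
  + split.
      move=> x; rewrite /xi2 /=; case: ifP => hx.
        by move: hx; rewrite inE => /andP[_]; move: (xi (Some x)) => v; lia.
      by rewrite subr0; exact: hxi.1.
    move=> C hC.
    have hs : xiplus xi C = xiplus xi1 C + xiplus xi2 C.
      by apply: xiplus_add => p; rewrite /xi2 addrC subrK.
    have e := hxi.2 C hC.
    have hne : xiplus xi1 C = 0 -> xiplus xi C != d - eps.
      move=> h; apply/negP => /eqP ht; have [a [ha hlt]] := hAC C hC ht.
      have aC : a \in C :&: A by rewrite ha set11.
      move: aC; rewrite inE => /andP[aC aA].
      have aA' : a \in A' by rewrite inE aA hlt.
      move: h; rewrite /xiplus (bigD1 a) //= aA' /=.
      have : 0 <= \sum_(i in C | i != a) xi1 (Some i).
        by apply: sumr_ge0 => i _ /=; case: ifP.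
      move: (\sum_(i in C | i != a) xi1 (Some i)) => w; lia.
    have -> : xi2 None = xi None - 1 by [].
    move: hne hs e; rewrite /d.
    case: (key C hC.1) => [[_ ->]|->] hne;
      first by move: (xiplus xi2 C) (xiplus xi C) (xi None) => s2 s v; lia.
    move: (hne erefl); move: (xiplus xi2 C) (xiplus xi C) (xi None) => s2 s v; lia.
  + by move=> p; rewrite /xi2 addrC subrK.
Qed.
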